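(* Let $\{D_1,D_2,D_3\}$ be a positively oriented orthonormal basis of $\mathbb{R}^3$ and let $J$ be a symmetric positive definite linear map $\mathbb{R}^3\to\mathbb{R}^3$ having $D_3$ as an eigenvector. Let $\Lambda:[0,T]\to SO(3)$ be a smooth curve and $\mu:[0,T]\to\mathbb{R}$ a function such that, for all $t\in[0,T]$, $$\nabla_{\dot d_3}\pi_\perp+\pi_\parallel\,\dot d_3=0,\qquad \dot\pi_\parallel+\pi_\perp\cdot\dot d_3+\mu=0,\qquad w\cdot d_3=0 .$$ Then the kinetic energy $K=\tfrac12 W\cdot JW=\tfrac12 w\cdot jw$ and the quantities $$\Pi^1=D_1\cdot\Pi=d_1\cdot\pi,\qquad \Pi^2=D_2\cdot\Pi=d_2\cdot\pi$$ are constant on $[0,T]$.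
   Context: Notation: $d_i(t)=\Lambda(t)D_i$ for $i=1,2,3$. For $v\in\mathbb{R}^3$, $\hat v$ denotes the skew-symmetric matrix with $\hat v a=v\times a$. The spatial angular velocity $w$ and convected angular velocity $W$ are defined by $\dot\Lambda=\hat w\Lambda=\Lambda\hat W$ (so $W=\Lambda^Tw$). The spatial inertia is $j=\Lambda J\Lambda^T$; the spatial angular momentum is $\pi=jw$ and the convected one is $\Pi=\Lambda^T\pi=JW$. Split $\pi=\pi_\perp+\pi_\parallel d_3$ with $\pi_\parallel=\pi\cdot d_3$ and $\pi_\perp=(I-d_3\otimes d_3)\pi$. For a curve $v(t)$ with $v(t)\cdot d_3(t)=0$, the covariant derivative on the unit sphere along $d_3$ is $\nabla_{\dot d_3}v:=(I-d_3\otimes d_3)\dot v$. The condition $w\cdot d_3=0$ is the non-twisting (nonholonomic) constraint and $\mu$ is the associated Lagrange multiplier; no external moments act. *)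

(* Defs.v *)
From HB Require Import structures.
From mathcomp Require Import all_boot all_order all_algebra.
From mathcomp Require Import all_classical all_reals all_analysis.
Set Implicit Arguments. Unset Strict Implicit. Unset Printing Implicit Defensive.
Import Order.TTheory GRing.Theory Num.Theory.
Import numFieldNormedType.Exports.
Local Open Scope ring_scope.

Section Rigid.
Variable R : realType.

Definition dotv (u v : 'cV[R]_3) : R := (u^T *m v) 0 0.

(* hat v : skew-symmetric matrix with hat v *m a = v x a *)
Definition hat (v : 'cV[R]_3) : 'M[R]_3 :=
  \matrix_(i < 3, j < 3)
    (if (i == 0 :> nat) && (j == 1 :> nat) then - v 2%:R 0
     else if (i == 0 :> nat) && (j == 2 :> nat) then v 1 0
     else if (i == 1 :> nat) && (j == 0 :> nat) then v 2%:R 0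
     else if (i == 1 :> nat) && (j == 2 :> nat) then - v 0 0
     else if (i == 2 :> nat) && (j == 0 :> nat) then - v 1 0
     else if (i == 2 :> nat) && (j == 1 :> nat) then v 0 0
     else 0).

(* inverse of hat on skew-symmetric matrices *)
Definition vee (A : 'M[R]_3) : 'cV[R]_3 :=
  \col_(i < 3) (if i == 0 :> nat then A 2%:R 1
                else if i == 1 :> nat then A 0 2%:R else A 1 0).

Definition frame_mx (D1 D2 D3 : 'cV[R]_3) : 'M[R]_3 :=
  \matrix_(i < 3, j < 3)
    (if j == 0 :> nat then D1 i 0 else if j == 1 :> nat then D2 i 0 else D3 i 0).

Definition orthonormal_pos_basis (D1 D2 D3 : 'cV[R]_3) : Prop :=
  [/\ dotv D1 D1 = 1, dotv D2 D2 = 1 & dotv D3 D3 = 1] /\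
  [/\ dotv D1 D2 = 0, dotv D1 D3 = 0 & dotv D2 D3 = 0] /\
  \det (frame_mx D1 D2 D3) = 1.

Definition sym_posdef (J : 'M[R]_3) : Prop :=
  J^T = J /\ forall v : 'cV[R]_3, v != 0 -> 0 < dotv v (J *m v).

Definition is_SO3 (A : 'M[R]_3) : Prop := A^T *m A = 1%:M /\ \det A = 1.

Definition smooth_curve (L : R -> 'M[R]_3) : Prop :=
  forall (n : nat) (t : R), derivable (derive1n n L) t 1.

Variables (J : 'M[R]_3) (L : R -> 'M[R]_3).

Definition dvec (D : 'cV[R]_3) (t : R) : 'cV[R]_3 := L t *m D.
(* spatial angular velocity: \dot Lambda = hat w Lambda, i.e. hat w = \dot Lambda Lambda^T *)
Definition w_sp (t : R) : 'cV[R]_3 := vee (derive1 L t *m (L t)^T).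
Definition W_cv (t : R) : 'cV[R]_3 := (L t)^T *m w_sp t.
Definition j_sp (t : R) : 'M[R]_3 := L t *m J *m (L t)^T.
Definition pi_sp (t : R) : 'cV[R]_3 := j_sp t *m w_sp t.
Definition Pi_cv (t : R) : 'cV[R]_3 := J *m W_cv t.
Definition pi_par (D3 : 'cV[R]_3) (t : R) : R := dotv (pi_sp t) (dvec D3 t).
Definition proj_perp (D3 : 'cV[R]_3) (t : R) : 'M[R]_3 :=
  1%:M - dvec D3 t *m (dvec D3 t)^T.
Definition pi_perp (D3 : 'cV[R]_3) (t : R) : 'cV[R]_3 :=
  proj_perp D3 t *m pi_sp t.
Definition cov_deriv (D3 : 'cV[R]_3) (v : R -> 'cV[R]_3) (t : R) : 'cV[R]_3 :=
  proj_perp D3 t *m derive1 v t.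
Definition kinetic (t : R) : R := 2^-1 * dotv (W_cv t) (J *m W_cv t).

End Rigid.

(* Main.v *)
Require Import Defs.
From HB Require Import structures.
From mathcomp Require Import all_boot all_order all_algebra.
From mathcomp Require Import all_classical all_reals all_analysis.
From mathcomp Require Import ring lra.
Import Order.TTheory GRing.Theory Num.Theory.
Import numFieldNormedType.Exports.
Local Open Scope ring_scope.

Local Open Scope classical_set_scope.

Section D.
Context {R : realType}.
Lemma entry_der {m n} {M : R -> 'M[R]_(m,n)} {t} i j : derivable M t 1 ->
  derivable (fun x => M x i j) t 1 /\ 'D_1 (fun x => M x i j) t = 'D_1 M t i j.
Proof. move=> dM; split; first by move/derivable_mxP: dM. by rewrite derive_mx // mxE. Qed.

Lemma mul_der {m n p} {M : R -> 'M[R]_(m,n)} {N : R -> 'M[R]_(n,p)} {t} :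
  derivable M t 1 -> derivable N t 1 ->
  derivable (fun x => M x *m N x) t 1 /\
  'D_1 (fun x => M x *m N x) t = 'D_1 M t *m N t + M t *m 'D_1 N t.
Proof.
move=> dM dN.
have eF i k : (fun x => (M x *m N x) i k) = \sum_(j < n) ((fun x => M x i j) * (fun x => N x j k)).
  by apply/funext => x; rewrite mxE fct_sumE.
have dij i j : derivable (fun x => M x i j) t 1 by move/derivable_mxP: dM.
have dij' i j : derivable (fun x => N x i j) t 1 by move/derivable_mxP: dN.
have dF i k : derivable (fun x => (M x *m N x) i k) t 1.
  by rewrite eF; apply: derivable_sum => j; apply: derivableM.
split; first by apply/derivable_mxP.
rewrite derive_mx; last by apply/derivable_mxP.
apply/matrixP => i k; rewrite !mxE eF derive_sum; last by move=> j; apply: derivableM.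
rewrite -big_split; apply: eq_bigr => j _ /=.
rewrite deriveM // (entry_der i j dM).2 (entry_der j k dN).2 /=.
by rewrite /GRing.scale /= mulrC addrC [X in _ + X]mulrC.
Qed.


Lemma sel_der {m n p q} (F : 'M[R]_(m,n) -> 'M[R]_(p,q))
  (r : 'I_p -> 'I_q -> 'I_m) (c : 'I_p -> 'I_q -> 'I_n) (M : R -> 'M[R]_(m,n)) t :
  (forall A i j, F A i j = A (r i j) (c i j)) -> derivable M t 1 ->
  derivable (fun x => F (M x)) t 1 /\ 'D_1 (fun x => F (M x)) t = F ('D_1 M t).
Proof.
move=> FE dM.
have eF i j : (fun x => F (M x) i j) = (fun x => M x (r i j) (c i j)).
  by apply/funext => x; rewrite FE.
have dF : derivable (fun x => F (M x)) t 1.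
  by apply/derivable_mxP => i j; rewrite eF; exact: (entry_der _ _ dM).1.
split => //; rewrite derive_mx //; apply/matrixP => i j.
by rewrite mxE eF (entry_der _ _ dM).2 FE.
Qed.

Lemma tr_der {m n} (M : R -> 'M[R]_(m,n)) t : derivable M t 1 ->
  derivable (fun x => (M x)^T) t 1 /\ 'D_1 (fun x => (M x)^T) t = ('D_1 M t)^T.
Proof. by apply: (@sel_der _ _ _ _ trmx (fun i j => j) (fun i j => i)) => A i j; rewrite mxE. Qed.

Definition vr (i : 'I_3) : 'I_3 := if i == 0 :> nat then 2%:R else if i == 1 :> nat then 0 else 1.
Definition vc (i : 'I_3) : 'I_3 := if i == 0 :> nat then 1 else if i == 1 :> nat then 2%:R else 0.

Lemma veeE (A : 'M[R]_3) i j : vee A i j = A (vr i) (vc i).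
Proof. by rewrite mxE /vr /vc; case: ifP => _ //; case: ifP. Qed.

Lemma vee_der (M : R -> 'M[R]_3) t : derivable M t 1 ->
  derivable (fun x => vee (M x)) t 1 /\ 'D_1 (fun x => vee (M x)) t = vee ('D_1 M t).
Proof. by apply: (@sel_der _ _ _ _ (@vee R) (fun i j => vr i) (fun i j => vc i)) => A i j; rewrite veeE. Qed.

Lemma mulc_der {m n p} (K : 'M[R]_(m,n)) (N : R -> 'M[R]_(n,p)) t :
  derivable N t 1 ->
  derivable (fun x => K *m N x) t 1 /\ 'D_1 (fun x => K *m N x) t = K *m 'D_1 N t.
Proof.
move=> dN; have := mul_der (derivable_cst K t 1) dN.
by rewrite derive_cst mul0mx add0r.
Qed.

Lemma mulcr_der {m n p} (M : R -> 'M[R]_(m,n)) (K : 'M[R]_(n,p)) t :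
  derivable M t 1 ->
  derivable (fun x => M x *m K) t 1 /\ 'D_1 (fun x => M x *m K) t = 'D_1 M t *m K.
Proof.
move=> dM; have := mul_der dM (derivable_cst K t 1).
by rewrite derive_cst mulmx0 addr0.
Qed.


Lemma locz_der {V : normedModType R} {M : R -> V} {K t} :
  (\forall x \near t, M x = K) -> 'D_1 M t = 0.
Proof. move=> h; rewrite (@near_eq_derive _ _ _ M (cst K)) ?derive_cst //. Qed.

Lemma const_on (f : R -> R) T : (forall x, derivable f x 1) ->
  (forall x, x \in `]0, T[ -> 'D_1 f x = 0) ->
  forall s t, s \in `[0, T] -> t \in `[0, T] -> f s = f t.
Proof.
move=> df d0.
suff H : forall s t, s \in `[0, T] -> t \in `[0, T] -> s < t -> f s = f t.
  move=> s t hs ht; case: (ltgtP s t) => [st|ts|->] //.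
    exact: H.
  by apply/esym/H.
move=> s t hs ht st.
have [c cst hc] := @MVT R f (fun x => 'D_1 f x) s t st
  (fun x _ => derivableP (df x)) 
  (continuous_subspaceT (fun r => differentiable_continuous ((derivable1_diffP f r).1 (df r)))).
rewrite d0 ?mul0r in hc; last first.
  move: hs ht cst; rewrite ?inE /= ?in_itv /= => /andP[h0 _] /andP[_ hT] /andP[h1 h2].
  by rewrite (le_lt_trans h0 h1) (lt_le_trans h2 hT).
by apply/eqP; rewrite eq_sym -subr_eq0 hc.
Qed.

Lemma sum3 (F : 'I_3 -> R) : \sum_(i < 3) F i = F 0 + F 1 + F 2%:R.
Proof.
rewrite !big_ord_recl big_ord0 addr0 addrA.
by congr (F _ + F _ + F _); apply/val_inj.
Qed.

Lemma ord3 (i : 'I_3) : i = 0 \/ i = 1 \/ i = 2%:R.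
Proof.
case: i => [[|[|[|i]]] hi]; [left|right;left|right;right|by []]; exact: val_inj.
Qed.

Lemma ord1 (i : 'I_1) : i = 0.
Proof. by case: i => [[|i]] hi //; apply: val_inj. Qed.

Lemma hathat (a b : 'cV[R]_3) :
  hat a *m hat b = b *m a^T - (a^T *m b) 0 0 *: 1%:M.
Proof.
apply/matrixP => i j; rewrite !mxE !sum3 !mxE /=.
case: (ord3 i) => [->|[->|->]]; case: (ord3 j) => [->|[->|->]] /=;
  rewrite big_ord1 !mxE; ring.
Qed.

Lemma hatvee (O : 'M[R]_3) : O^T = - O -> hat (vee O) = O.
Proof.
move=> sk; have h i j : O j i = - O i j by have := congr1 (fun M : 'M[R]_3 => M i j) sk; rewrite !mxE.
have h0 i : O i i = 0 by have := h i i; lra.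
apply/matrixP => i j; rewrite !mxE.
case: (ord3 i) => [->|[->|->]]; case: (ord3 j) => [->|[->|->]] /=;
  rewrite ?h0 // -?h ?opprK //.
Qed.

Lemma trz {m n} {M : 'M[R]_(m,n)} : M = 0 -> M^T = 0.
Proof. by move=> ->; rewrite trmx0. Qed.

Lemma cross (w p d : 'cV[R]_3) : w^T *m d = 0 -> p^T *m d = 0 -> d^T *m d = 1%:M ->
  (1%:M - d *m d^T) *m (hat w *m p) = 0.
Proof.
move=> wd pd dd.
have dw : d^T *m w = 0 by have := trz wd; rewrite trmx_mul trmxK.
have dp : d^T *m p = 0 by have := trz pd; rewrite trmx_mul trmxK.
have -> : 1%:M - d *m d^T = - (hat d *m hat d).
  by rewrite hathat dd mxE /= scale1r opprB.
rewrite mulNmx -mulmxA (mulmxA (hat d) (hat w)) hathat dw mxE /= scale0r subr0.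
by rewrite -!mulmxA dp !mulmx0 oppr0.
Qed.


Lemma alg (A B C J : 'M[R]_3) (e : 'cV[R]_3) lam :
  A^T *m A = 1%:M -> B^T *m A + A^T *m B = 0 -> J^T = J -> J *m e = lam *: e ->
  e^T *m e = 1%:M ->
  (vee (B *m A^T))^T *m (A *m e) = 0 ->
  (vee (C *m A^T + B *m B^T))^T *m (A *m e) + (vee (B *m A^T))^T *m (B *m e) = 0 ->
  (1%:M - A *m e *m (A *m e)^T) *m
    (- (B *m e *m (A *m e)^T + A *m e *m (B *m e)^T) *m (A *m J *m A^T *m vee (B *m A^T))
     + (1%:M - A *m e *m (A *m e)^T) *m
       ((B *m J *m A^T + A *m J *m B^T) *m vee (B *m A^T) + A *m J *m A^T *m vee (C *m A^T + B *m B^T)))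
   + ((A *m J *m A^T *m vee (B *m A^T))^T *m (A *m e)) 0 0 *: (B *m e) = 0 ->
  J *m (B^T *m vee (B *m A^T) + A^T *m vee (C *m A^T + B *m B^T)) = 0.
Proof.
set w := vee (B *m A^T); set wd := vee (C *m A^T + B *m B^T); set d := A *m e.
move=> AtA skB Js Je ee h6 h7 h5.
have AAt : A *m A^T = 1%:M by apply: mulmx1C.
have Bhat : B = hat w *m A.
  rewrite hatvee; first by rewrite -mulmxA AtA mulmx1.
  have : A *m (B^T *m A + A^T *m B) *m A^T = 0 by rewrite skB mulmx0 mul0mx.
  rewrite mulmxDr mulmxDl !mulmxA AAt mul1mx -!mulmxA AAt mulmx1 trmx_mul trmxK.
  by move/eqP; rewrite addr_eq0 => /eqP.
have dd : d^T *m d = 1%:M by rewrite /d trmx_mul mulmxA -(mulmxA e^T) AtA mulmx1 ee.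
set Pi := J *m (A^T *m w).
set Pid := J *m (B^T *m w + A^T *m wd).
set pi := A *m J *m A^T *m w.
have piE : pi = A *m Pi by rewrite /pi /Pi !mulmxA.
have pid : pi^T *m d = 0.
  rewrite piE /Pi /d !trmx_mul Js !mulmxA -(mulmxA _ A^T A) AtA mulmx1.
  by rewrite trmxK -!mulmxA Je -!scalemxAr -/d h6 scaler0.
set P := 1%:M - d *m d^T.
have z1 : (0 : 'M[R]_1) 0 0 = 0 by rewrite mxE.
rewrite -/pi pid z1 scale0r addr0 in h5.
have Pd0 : P *m d = 0 by rewrite /P mulmxBl mul1mx -mulmxA dd mulmx1 subrr.
have dP : d^T *m P = 0 by rewrite /P mulmxBr mulmx1 mulmxA dd mul1mx subrr.
have PP : P *m P = P by rewrite {1}/P mulmxBl mul1mx -mulmxA dP mulmx0 subr0.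
have dpi : d^T *m pi = 0 by have := trz pid; rewrite trmx_mul trmxK.
have dE : d = A *m e by [].
have PE : P = 1%:M - d *m d^T by [].
rewrite -![1%:M - d *m d^T]/P in h5.
have Pc : P *m (hat w *m pi) = 0 by apply: cross.
clearbody P d pi.
have T1 : P *m (- (B *m e *m d^T + d *m (B *m e)^T) *m pi) = 0.
  rewrite mulNmx mulmxDl -(mulmxA (B *m e)) dpi mulmx0 add0r -(mulmxA d).
  by rewrite mulmxN (mulmxA P) Pd0 mul0mx oppr0.
rewrite mulmxDr T1 add0r mulmxA PP in h5.
have pidE : (B *m J *m A^T + A *m J *m B^T) *m w + A *m J *m A^T *m wd
    = B *m Pi + A *m Pid.
  by rewrite /Pi /Pid mulmxDl !mulmxDr !mulmxA addrA.
rewrite pidE {1}Bhat -mulmxA -piE mulmxDr Pc add0r in h5.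
have ePid : e^T *m Pid = 0.
  have := trz h7; rewrite linearD /= !trmx_mul !trmxK => h7'.
  rewrite /Pid mulmxA -{1}Js -trmx_mul Je linearZ /= -scalemxAl.
  by rewrite mulmxDr !mulmxA; rewrite dE trmx_mul in h7'; rewrite addrC h7' scaler0.
have dPid : d^T *m (A *m Pid) = 0 by rewrite dE trmx_mul mulmxA -(mulmxA e^T) AtA mulmx1 ePid.
have APid : A *m Pid = 0.
  by move: h5; rewrite PE mulmxBl mul1mx -mulmxA dPid mulmx0 subr0.
by rewrite -[Pid]mul1mx -AtA -mulmxA APid mulmx0.
Qed.

Lemma itvcc (x T : R) : (x \in `[0, T]) = (0 <= x <= T)%R.
Proof. by apply/idP/idP; rewrite in_setE /= in_itv. Qed.
Lemma itvoo (x T : R) : (x \in `]0, T[) = (0 < x < T)%R.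
Proof. by apply/idP/idP; rewrite in_setE /= in_itv. Qed.
Lemma near_cc (t T : R) : t \in `]0, T[ -> \forall x \near t, x \in `[0, T].
Proof.
move=> ht; have : t \in `]0, T[%R by rewrite in_itv /= -itvoo.
move/near_in_itvoo; apply: filterS => x; rewrite itvcc in_itv /= => /andP[h1 h2].
by rewrite !ltW.
Qed.
Lemma sub_der {m n} (K : 'M[R]_(m,n)) (M : R -> 'M[R]_(m,n)) t :
  derivable M t 1 ->
  derivable (fun x => K - M x) t 1 /\ 'D_1 (fun x => K - M x) t = - 'D_1 M t.
Proof.
move=> dM; have d1 := derivableB (derivable_cst K t 1) dM.
have := deriveB (derivable_cst K t 1) dM; rewrite derive_cst sub0r => h.
by split; [exact: d1 | exact: h].
Qed.
End D.

Section M.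
Context {R : realType}.

Lemma smooth01 (L : R -> 'M[R]_3) : smooth_curve L ->
  (forall x, derivable L x 1) /\ (forall x, derivable (derive1 L) x 1).
Proof. by move=> s; split => x; [have := s 0%N x | have := s 1%N x]; rewrite ?derive1n0 ?derive1n1. Qed.

Lemma w_der (L : R -> 'M[R]_3) x : smooth_curve L ->
  derivable (w_sp L) x 1 /\ 'D_1 (w_sp L) x =
  vee (derive1 (derive1 L) x *m (L x)^T + derive1 L x *m (derive1 L x)^T).
Proof.
move=> /(smooth01 _)[dL dB].
have [d1 D1] := mul_der (dB x) (tr_der _ _ (dL x)).1.
have [d2 D2] := vee_der _ _ d1.
split; first exact: d2.
rewrite /w_sp; etransitivity; first exact: D2.
by rewrite D1 (tr_der _ _ (dL x)).2 -!derive1E.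
Qed.

Lemma W_der (L : R -> 'M[R]_3) x : smooth_curve L ->
  derivable (W_cv L) x 1 /\ 'D_1 (W_cv L) x =
  (derive1 L x)^T *m w_sp L x + (L x)^T *m
  vee (derive1 (derive1 L) x *m (L x)^T + derive1 L x *m (derive1 L x)^T).
Proof.
move=> sL; have [dL dB] := smooth01 _ sL; have [dw Dw] := w_der _ x sL.
have [d1 D1] := mul_der (tr_der _ _ (dL x)).1 dw.
split; first exact: d1.
rewrite /W_cv; etransitivity; first exact: D1.
by rewrite (tr_der _ _ (dL x)).2 Dw -!derive1E.
Qed.

Lemma Pi_der J (L : R -> 'M[R]_3) x : smooth_curve L ->
  derivable (Pi_cv J L) x 1 /\ 'D_1 (Pi_cv J L) x = J *m 'D_1 (W_cv L) x.
Proof.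
move=> sL; have [dW DW] := W_der _ x sL.
have [d1 D1] := mulc_der J _ _ dW.
split; first exact: d1.
by rewrite /Pi_cv; etransitivity; first exact: D1.
Qed.

Lemma dvec_der (L : R -> 'M[R]_3) D3 x : smooth_curve L ->
  derivable (dvec L D3) x 1 /\ 'D_1 (dvec L D3) x = derive1 L x *m D3.
Proof.
move=> sL; have [dL dB] := smooth01 _ sL.
have [d1 D1] := mulcr_der _ D3 _ (dL x).
split; first exact: d1.
by rewrite /dvec; etransitivity; first exact: D1; rewrite -derive1E.
Qed.

Lemma proj_der (L : R -> 'M[R]_3) D3 x : smooth_curve L ->
  derivable (proj_perp L D3) x 1 /\ 'D_1 (proj_perp L D3) x =
  - (derive1 L x *m D3 *m (L x *m D3)^T + L x *m D3 *m (derive1 L x *m D3)^T).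
Proof.
move=> sL; have [dd Dd] := dvec_der _ D3 x sL.
have [d1 D1] := mul_der dd (tr_der _ _ dd).1.
have [d2 D2] := sub_der 1%:M _ _ d1.
split; first exact: d2.
rewrite /proj_perp; etransitivity; first exact: D2.
by congr (- _); etransitivity; first exact: D1; rewrite (tr_der _ _ dd).2 Dd.
Qed.

Lemma pisp_der J (L : R -> 'M[R]_3) x : smooth_curve L ->
  derivable (pi_sp J L) x 1 /\ 'D_1 (pi_sp J L) x =
  (derive1 L x *m J *m (L x)^T + L x *m J *m (derive1 L x)^T) *m w_sp L x
  + L x *m J *m (L x)^T *m
    vee (derive1 (derive1 L) x *m (L x)^T + derive1 L x *m (derive1 L x)^T).
Proof.
move=> sL; have [dL dB] := smooth01 _ sL.
have [d1 D1] := mulcr_der _ J _ (dL x).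
have [d2 D2] := mul_der d1 (tr_der _ _ (dL x)).1.
have [dw Dw] := w_der _ x sL.
have [d3 D3] := mul_der d2 dw.
split; first exact: d3.
rewrite /pi_sp /j_sp; etransitivity; first exact: D3.
rewrite Dw; congr (_ *m _ + _).
etransitivity; first exact: D2.
have DL : 'D_1 L x = derive1 L x by rewrite derive1E.
rewrite (tr_der _ _ (dL x)).2 DL; congr (_ *m _ + _).
by etransitivity; first exact: D1; rewrite DL.
Qed.

Lemma piperp_der J (L : R -> 'M[R]_3) D3 x : smooth_curve L ->
  'D_1 (pi_perp J L D3) x =
  'D_1 (proj_perp L D3) x *m pi_sp J L x + proj_perp L D3 x *m 'D_1 (pi_sp J L) x.
Proof.
move=> sL; have [dP _] := proj_der _ D3 x sL; have [dp _] := pisp_der J _ x sL.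
have [d1 D1] := mul_der dP dp.
by rewrite /pi_perp; etransitivity; first exact: D1.
Qed.

Lemma Pid0 (D3 : 'cV[R]_3) J (L : R -> 'M[R]_3) lam t :
  smooth_curve L -> J^T = J -> J *m D3 = lam *: D3 -> D3^T *m D3 = 1%:M ->
  (\forall x \near t, (L x)^T *m L x = 1%:M) ->
  (\forall x \near t, dotv (w_sp L x) (dvec L D3 x) = 0) ->
  cov_deriv L D3 (pi_perp J L D3) t + pi_par J L D3 t *: derive1 (dvec L D3) t = 0 ->
  J *m 'D_1 (W_cv L) t = 0.
Proof.
move=> sL Js Je ee hO hw h5.
have [dL dB] := smooth01 _ sL.
have AtA : (L t)^T *m L t = 1%:M := nbhs_singleton hO.
have DL : 'D_1 L t = derive1 L t by rewrite derive1E.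
have skB : (derive1 L t)^T *m L t + (L t)^T *m derive1 L t = 0.
  have [d1 D1] := mul_der (tr_der _ _ (dL t)).1 (dL t).
  rewrite -(locz_der hO); symmetry; etransitivity; first exact: D1.
  by rewrite (tr_der _ _ (dL t)).2 DL.
have h6 : (w_sp L t)^T *m (L t *m D3) = 0.
  rewrite [LHS]mx11_scalar; have := nbhs_singleton hw; rewrite /dotv /dvec => ->.
  by rewrite -scalemx1 scale0r.
have h7 : (vee (derive1 (derive1 L) t *m (L t)^T + derive1 L t *m (derive1 L t)^T))^T
    *m (L t *m D3) + (w_sp L t)^T *m (derive1 L t *m D3) = 0.
  have [dw Dw] := w_der _ t sL; have [dd Dd] := dvec_der _ D3 t sL.
  have [d1 D1] := mul_der (tr_der _ _ dw).1 dd.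
  have [_ D2] := entry_der 0 0 d1.
  have h := locz_der hw.
  set M := (X in X = 0).
  suff E : M 0 0 = 'D_1 (fun x => dotv (w_sp L x) (dvec L D3 x)) t.
    by rewrite [LHS]mx11_scalar E h -scalemx1 scale0r.
  symmetry; etransitivity; first exact: D2.
  by rewrite D1 (tr_der _ _ dw).2 Dw Dd.
rewrite /cov_deriv !derive1E piperp_der // (proj_der _ _ _ sL).2 (pisp_der _ _ _ sL).2
  (dvec_der _ _ _ sL).2 in h5.
rewrite (W_der _ t sL).2.
exact: (alg _ _ _ _ _ _ AtA skB Js Je ee h6 h7 h5).
Qed.

Lemma kin_der J (L : R -> 'M[R]_3) x : smooth_curve L ->
  derivable (kinetic J L) x 1 /\ 'D_1 (kinetic J L) x =
  2^-1 * (('D_1 (W_cv L) x)^T *m (J *m W_cv L x) + (W_cv L x)^T *m (J *m 'D_1 (W_cv L) x)) 0 0.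
Proof.
move=> sL; have [dW DW] := W_der _ x sL.
have [d1 D1] := mul_der (tr_der _ _ dW).1 (mulc_der J _ _ dW).1.
have [d2 D2] := entry_der 0 0 d1.
have d3 := derivableM (derivable_cst (2^-1 : R) x 1) d2.
split; first exact: d3.
rewrite /kinetic /dotv; etransitivity; first exact: (deriveMl _ d2).
congr (_ * _); rewrite D2 D1 (tr_der _ _ dW).2 (mulc_der J _ _ dW).2 //.
Qed.

Lemma comp_der (D1 : 'cV[R]_3) J (L : R -> 'M[R]_3) x : smooth_curve L ->
  derivable (fun x => dotv D1 (Pi_cv J L x)) x 1 /\
  'D_1 (fun x => dotv D1 (Pi_cv J L x)) x = (D1^T *m (J *m 'D_1 (W_cv L) x)) 0 0.
Proof.
move=> sL; have [dP DP] := Pi_der J _ x sL.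
have [d1 D1'] := mulc_der D1^T _ _ dP.
have [d2 D2] := entry_der 0 0 d1.
split; first exact: d2.
rewrite /dotv; etransitivity; first exact: D2.
by rewrite D1' DP.
Qed.

End M.

Theorem theorem6 (R : realType) (D1 D2 D3 : 'cV[R]_3) (J : 'M[R]_3)
  (T : R) (L : R -> 'M[R]_3) (mu : R -> R) :
  orthonormal_pos_basis D1 D2 D3 ->
  sym_posdef J ->
  (exists lam : R, J *m D3 = lam *: D3) ->
  smooth_curve L ->
  (forall t, t \in `[0, T] -> is_SO3 (L t)) ->
  (forall t, t \in `[0, T] ->
     cov_deriv L D3 (pi_perp J L D3) t
       + pi_par J L D3 t *: derive1 (dvec L D3) t = 0) ->
  (forall t, t \in `[0, T] ->
     derive1 (pi_par J L D3) t
       + dotv (pi_perp J L D3 t) (derive1 (dvec L D3) t) + mu t = 0) ->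
  (forall t, t \in `[0, T] -> dotv (w_sp L t) (dvec L D3 t) = 0) ->
  forall s t, s \in `[0, T] -> t \in `[0, T] ->
    [/\ kinetic J L s = kinetic J L t,
        dotv D1 (Pi_cv J L s) = dotv D1 (Pi_cv J L t) &
        dotv D2 (Pi_cv J L s) = dotv D2 (Pi_cv J L t)].
Proof.
move=> [[_ _ e3] _] [Js _] [lam Je] sL SO H5 _ Hw s t hs ht.
have ee : D3^T *m D3 = 1%:M by rewrite [LHS]mx11_scalar; move: e3; rewrite /dotv => ->.
have PD x : x \in `]0, T[ -> J *m 'D_1 (W_cv L) x = 0.
  move=> hx; have nx := near_cc _ _ hx.
  apply: (Pid0 _ _ _ lam x sL Js Je ee).
  - by apply: filterS nx => y /SO [].
  - by apply: filterS nx => y /Hw.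
  - by apply: H5; move: hx; rewrite itvoo itvcc => /andP[h1 h2]; rewrite !ltW.
split.
- apply: (const_on (kinetic J L) T) => // [x|x hx]; first exact: (kin_der J _ x sL).1.
  rewrite (kin_der J _ x sL).2 PD // mulmx0 addr0.
  by rewrite mulmxA -{1}Js -trmx_mul PD // trmx0 mul0mx mxE mulr0.
- apply: (const_on (fun x => dotv D1 (Pi_cv J L x)) T _ _ s t hs ht) => [x|x hx].
    exact: (comp_der D1 J _ x sL).1.
  by rewrite (comp_der D1 J _ x sL).2 PD // mulmx0 mxE.
- apply: (const_on (fun x => dotv D2 (Pi_cv J L x)) T _ _ s t hs ht) => [x|x hx].
    exact: (comp_der D2 J _ x sL).1.
  by rewrite (comp_der D2 J _ x sL).2 PD // mulmx0 mxE.
Qed.
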